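(* Let $\Gamma$ be the rank four incidence system defined in the context from the cube. Then $\Gamma$ is an incidence geometric representation for the group $\mathrm{Sym}(4)\times C_2$.
   Context: An incidence system is a quadruple $\Gamma=(X,*,t,I)$ where $X$ is a set of elements, $I$ a finite set of types, $t:X\to I$ a surjective type function, and $*$ a symmetric binary relation on $X$ (incidence) such that no two elements of the same type are incident. A correlation of $\Gamma$ is a permutation $\alpha$ of $X$ such that for all $x,y\in X$: $t(x)=t(y)\iff t(\alpha(x))=t(\alpha(y))$, and $x*y\iff \alpha(x)*\alpha(y)$. The correlations form a group $\mathrm{Aut}(\Gamma)$; its normal subgroup of type-preserving correlations is $\mathrm{Aut}_I(\Gamma)$. An incidence geometric representation for a group $G$ is an incidence system $\Gamma$ together with isomorphisms $\varphi_1:\mathrm{Inn}(G)\to\mathrm{Aut}_I(\Gamma)$ and $\varphi_2:\mathrm{Aut}(G)\to\mathrm{Aut}(\Gamma)$ with $\varphi_2|_{\mathrm{Inn}(G)}=\varphi_1$. Construction: consider the 3-dimensional cube with its 8 vertices, 12 edges and 6 square faces. The graph formed by its vertices and edges is bipartite; let $\{P_1,P_2\}$ be its proper 2-coloring (the vertex sets of the two tetrahedra inscribed in the cube). The elements of $\Gamma$ of type $1$ are the vertices in $P_1$, of type $2$ the vertices in $P_2$, of type $3$ the edges of the cube, and of type $4$ the faces of the cube. Incidence is induced from the cube: a vertex and an edge/face are incident iff the vertex lies on it, an edge and a face are incident iff the edge lies on the face; two vertices are never incident. *)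

(* Defs.v *)
From HB Require Import structures.
From mathcomp Require Import all_boot all_order all_fingroup all_solvable all_algebra.
Set Implicit Arguments. Unset Strict Implicit. Unset Printing Implicit Defensive.

Local Open Scope group_scope.

Record incsys := IncSys {
  elt : finType;
  typ : finType;
  tfun : elt -> typ;
  inc : rel elt
}.

Definition is_incidence_system (S : incsys) : Prop :=
  [/\ forall i : typ S, exists x : elt S, tfun x = i,
      forall x y : elt S, inc x y = inc y x &
      forall x y : elt S, tfun x = tfun y -> ~~ inc x y].

Definition correlations (S : incsys) : {set {perm elt S}} :=
  [set a : {perm elt S} |
     [forall x, forall y, (tfun x == tfun y) == (tfun (a x) == tfun (a y))] &&
     [forall x, forall y, inc x y == inc (a x) (a y)]].

Definition type_pres_correlations (S : incsys) : {set {perm elt S}} :=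
  [set a in correlations S | [forall x, tfun (a x) == tfun x]].

Definition Inn (gT : finGroupType) (G : {group gT}) : {set {perm gT}} :=
  conj_aut G @* G.

Definition incidence_geometric_representation (S : incsys)
    (gT : finGroupType) (G : {group gT}) : Prop :=
  is_incidence_system S /\
  exists phi2 : {morphism Aut G >-> {perm elt S}},
    isom (Aut G) (correlations S) phi2 /\
    phi2 @* Inn G = type_pres_correlations S.

Definition cvert := {ffun 'I_3 -> bool}.

Definition cadj (u v : cvert) : bool := #|[set i : 'I_3 | u i != v i]| == 1%N.

Definition cube_vertices : {set {set cvert}} := [set [set v] | v : cvert].
Definition cube_edges : {set {set cvert}} :=
  [set e : {set cvert} | [exists u : cvert, exists v : cvert, cadj u v && (e == [set u; v])]].
Definition cube_faces : {set {set cvert}} :=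
  [set [set v : cvert | v i == b] | i : 'I_3, b : bool].

Definition cube_elts : {set {set cvert}} := cube_vertices :|: cube_edges :|: cube_faces.

(* The elements of Gamma: vertices, edges and faces, each represented by its
   vertex set. *)
Definition cubeX := {x : {set cvert} | x \in cube_elts}.

(* Color class P1 of the bipartite cube graph: vertices of even weight. *)
Definition P1 : {set cvert} := [set v : cvert | ~~ odd #|[set i : 'I_3 | v i]|].

(* Types 1,2,3,4 are encoded as 0,1,2,3 : 'I_4. *)
Definition cube_type (x : cubeX) : 'I_4 :=
  if val x \in cube_vertices then (if val x \subset P1 then inord 0 else inord 1)
  else if val x \in cube_edges then inord 2 else inord 3.

Definition cube_inc (x y : cubeX) : bool := (val x \proper val y) || (val y \proper val x).

Definition Gamma_cube : incsys := @IncSys cubeX 'I_4 cube_type cube_inc.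

Definition S4xC2 : {group ({perm 'I_4} * 'Z_2)} := [set: {perm 'I_4} * 'Z_2]%G.

(* Main.v *)
Require Import Defs.
From HB Require Import structures.
From mathcomp Require Import all_boot all_order all_fingroup all_solvable all_algebra.
Set Implicit Arguments. Unset Strict Implicit. Unset Printing Implicit Defensive.

Lemma card_list (T : finType) (s : seq T) (P : pred T) :
  uniq s -> (forall x, x \in s) -> #|[set x | P x]| = count P s.
Proof.
move=> Us Hs.
have H : perm_eq (enum [set x | P x]) (filter P s).
  apply: uniq_perm; [exact: enum_uniq | exact: filter_uniq | ].
  by move=> x; rewrite mem_enum mem_filter inE Hs andbT.
by rewrite cardE (perm_size H) size_filter.
Qed.

Definition i0 : 'I_3 := @Ordinal 3 0 isT.
Definition i1 : 'I_3 := @Ordinal 3 1 isT.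
Definition i2 : 'I_3 := @Ordinal 3 2 isT.
Definition ordl3 : seq 'I_3 := [:: i0; i1; i2].
Lemma mem_ordl3 i : i \in ordl3.
Proof. by case: i => [[|[|[|]]] Hi]. Qed.
Lemma uniq_ordl3 : uniq ordl3. Proof. by []. Qed.

Definition b3 := (bool * bool * bool)%type.
Definition bits (t : b3) : seq bool := [:: t.1.1; t.1.2; t.2].
Definition vof (t : b3) : cvert := [ffun i : 'I_3 => nth false (bits t) i].
Definition bitsof (v : cvert) : b3 := (v i0, v i1, v i2).
Definition bl3 : seq b3 :=
  [:: (false,false,false); (false,false,true); (false,true,false); (false,true,true);
      (true,false,false); (true,false,true); (true,true,false); (true,true,true)].

Lemma vofK v : vof (bitsof v) = v.
Proof.
apply/ffunP => i; rewrite ffunE; case: i => [[|[|[|]]] Hi] //=;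
 by congr (v _); apply: val_inj.
Qed.
Lemma bitsofK t : bitsof (vof t) = t.
Proof. by case: t => [[a b] c]; rewrite /bitsof !ffunE. Qed.
Lemma vof_inj : injective vof. Proof. exact: can_inj bitsofK. Qed.
Lemma mem_bl3 t : t \in bl3. Proof. by case: t => [[[] []] []]. Qed.
Lemma vof_eq t u : (vof t == vof u) = (t == u).
Proof. by apply/eqP/eqP => [/vof_inj|->]. Qed.

Definition encS (X : {set cvert}) : seq bool := [seq vof t \in X | t <- bl3].
Lemma encS_inj X Y : encS X = encS Y -> X = Y.
Proof.
move/eq_in_map => H; apply/setP => v; rewrite -(vofK v).
exact: (H (bitsof v) (mem_bl3 _)).
Qed.

Definition vmask (t : b3) := [seq u == t | u <- bl3].
Definition emask (t t' : b3) := [seq (u == t) || (u == t') | u <- bl3].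
Definition fmask (i : nat) (b : bool) := [seq nth false (bits u) i == b | u <- bl3].

Lemma encS_vert t : encS [set vof t] = vmask t.
Proof. by apply: eq_map => u; rewrite inE vof_eq. Qed.
Lemma encS_edge t t' : encS [set vof t; vof t'] = emask t t'.
Proof. by apply: eq_map => u; rewrite !inE !vof_eq. Qed.
Lemma encS_face (i : 'I_3) b : encS [set v : cvert | v i == b] = fmask i b.
Proof. by apply: eq_map => u; rewrite inE ffunE. Qed.

Definition cadjb (t u : b3) :=
  count (fun i => nth false (bits t) i != nth false (bits u) i) [:: 0; 1; 2] == 1.
Lemma cadj_vof t u : cadj (vof t) (vof u) = cadjb t u.
Proof.
rewrite /cadj (card_list _ uniq_ordl3 mem_ordl3) /= !ffunE.
by case: t u => [[a b] c] [[a' b'] c'].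
Qed.

Definition maskList : seq (seq bool) :=
  undup ([seq vmask t | t <- bl3] ++
         [seq emask p.1 p.2 | p <- [seq p <- [seq (t, u) | t <- bl3, u <- bl3] | cadjb p.1 p.2]] ++
         [seq fmask i b | i <- [:: 0; 1; 2], b <- [:: false; true]]).

Lemma vX_proof t : [set vof t] \in cube_elts.
Proof. by rewrite /cube_elts !in_setU; apply/orP; left; apply/orP; left; apply/imsetP; exists (vof t). Qed.
Definition vX t : cubeX := Sub [set vof t] (vX_proof t).
Lemma eX_proof t u : cadjb t u -> [set vof t; vof u] \in cube_elts.
Proof.
move=> H; rewrite /cube_elts !in_setU; apply/orP; left; apply/orP; right.
rewrite inE; apply/existsP; exists (vof t); apply/existsP; exists (vof u).
by rewrite cadj_vof H eqxx.
Qed.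
Definition eX t u (H : cadjb t u) : cubeX := Sub [set vof t; vof u] (eX_proof H).
Lemma fX_proof (i : 'I_3) b : [set v : cvert | v i == b] \in cube_elts.
Proof. by rewrite /cube_elts !in_setU; apply/orP; right; apply/imset2P; exists i b. Qed.
Definition fX (i : 'I_3) b : cubeX := Sub [set v : cvert | v i == b] (fX_proof i b).

Definition encX (x : cubeX) := encS (val x).
Lemma encX_inj : injective encX.
Proof. by move=> x y /encS_inj /val_inj. Qed.

Lemma ENUM x : encX x \in maskList.
Proof.
case: x => X HX; rewrite /encX /=.
rewrite mem_undup !mem_cat.
move: HX; rewrite /cube_elts !in_setU => /orP [/orP [HV|HE]|HF].
- case/imsetP: HV => v _ ->; rewrite -(vofK v) encS_vert.
  by rewrite (map_f vmask (mem_bl3 _)).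
- move: HE; rewrite inE => /existsP [u /existsP [v /andP [Hc /eqP ->]]].
  rewrite -(vofK u) -(vofK v) encS_edge; rewrite -(vofK u) -(vofK v) cadj_vof in Hc.
  apply/orP; right; apply/orP; left.
  apply/mapP; exists (bitsof u, bitsof v) => //.
  rewrite mem_filter Hc andTb; apply/seq.allpairsP; exists (bitsof u, bitsof v); by rewrite !mem_bl3.
- case/imset2P: HF => i b _ _ ->; rewrite encS_face.
  apply/orP; right; apply/orP; right.
  by case: i => [[|[|[|]]] Hi]; case: b.
Qed.

Lemma SURJ m : m \in maskList -> exists x, encX x = m.
Proof.
rewrite mem_undup !mem_cat => /orP [H|/orP [H|H]].
- case/mapP: H => t _ ->.
  by exists (vX t); rewrite /encX /= encS_vert.
- case/mapP: H => p Hp ->.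
  move: Hp; rewrite mem_filter => /andP [Hc _].
  by exists (eX Hc); rewrite /encX /= encS_edge.
- move: H => /or4P [] // /mapP [b _ ->];
    [exists (fX i0 b) | exists (fX i1 b) | exists (fX i2 b)];
    by rewrite /encX /= encS_face.
Qed.

Lemma cardCX (P : pred (seq bool)) : #|[set y : cubeX | P (encX y)]| = count P maskList.
Proof.
have HT : forall x : cubeX, x \in enum [set: cubeX] by move=> x; rewrite mem_enum inE.
have Hp : perm_eq (map encX (enum [set: cubeX])) maskList.
  apply: uniq_perm; [by rewrite (map_inj_uniq encX_inj) enum_uniq | exact: undup_uniq | ].
  move=> m; apply/mapP/idP => [[x _ ->]|/SURJ [x <-]]; first exact: ENUM.
  by exists x.
rewrite (card_list _ (enum_uniq _) HT).
by rewrite -(count_map encX) (seq.permP Hp).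
Qed.

Definition subM (m1 m2 : seq bool) := all (fun p => p.1 ==> p.2) (zip m1 m2).
Lemma encS_sub (X Y : {set cvert}) : (X \subset Y) = subM (encS X) (encS Y).
Proof.
rewrite /subM /encS zip_map all_map; apply/subsetP/allP => [H t _ | H v].
  by apply/implyP => /H.
rewrite -(vofK v) => Hv; have /= := H (bitsof v) (mem_bl3 _).
by rewrite Hv.
Qed.
Definition properM m1 m2 := subM m1 m2 && ~~ subM m2 m1.
Definition incM m1 m2 := properM m1 m2 || properM m2 m1.
Lemma inc_encX x y : cube_inc x y = incM (encX x) (encX y).
Proof. by rewrite /cube_inc /incM /properM !properE !encS_sub. Qed.

Definition degX (x : cubeX) := #|[set y | cube_inc x y]|.
Definition degM m := count (incM m) maskList.
Lemma degX_enc x : degX x = degM (encX x).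
Proof.
rewrite /degX /degM -cardCX; apply: eq_card => y; by rewrite !inE inc_encX.
Qed.

Lemma card_encS (X : {set cvert}) : #|X| = count id (encS X).
Proof.
have -> : X = [set v | v \in X] by apply/setP => v; rewrite inE.
rewrite (@card_list _ (map vof bl3)).
- by rewrite count_map /encS count_map; apply: eq_count => t; rewrite /= inE.
- by rewrite (map_inj_uniq vof_inj).
- by move=> v; rewrite -(vofK v) map_f ?mem_bl3.
Qed.

Definition p1m : seq bool := [seq ~~ odd (count id (bits t)) | t <- bl3].
Lemma encS_P1 : encS P1 = p1m.
Proof.
apply: eq_map => t; rewrite inE (card_list _ uniq_ordl3 mem_ordl3) /= !ffunE.
by case: t => [[[] []] []].
Qed.

Definition tyN (m : seq bool) : nat :=
  if count id m == 1 then (if subM m p1m then 0 else 1)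
  else if count id m == 2 then 2 else 3.
Lemma tyN_lt m : tyN m < 4.
Proof. by rewrite /tyN; case: ifP => _; [case: ifP|case: ifP]. Qed.

Lemma cadj_irr v : cadj v v = false.
Proof. by rewrite /cadj (card_list _ uniq_ordl3 mem_ordl3) /= !eqxx. Qed.

Lemma edge_count (X : {set cvert}) : X \in cube_edges -> count id (encS X) = 2.
Proof.
rewrite inE => /existsP [u /existsP [v /andP [Hc /eqP ->]]].
rewrite -card_encS cards2; case: eqP => // E.
by rewrite E cadj_irr in Hc.
Qed.

Lemma type_encS (X : {set cvert}) : X \in cube_elts ->
  (if X \in cube_vertices then (if X \subset P1 then inord 0 else inord 1)
   else if X \in cube_edges then inord 2 else inord 3) = inord (tyN (encS X)) :> 'I_4.
Proof.
move=> HX; rewrite /tyN.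
have Hv : (X \in cube_vertices) = (count id (encS X) == 1).
  rewrite -card_encS; apply/imsetP/cards1P => [[v _ ->]|[v ->]]; by exists v.
rewrite Hv encS_sub encS_P1; case: ifP => H1; first by case: ifP.
have He : (X \in cube_edges) = (count id (encS X) == 2).
  move: HX; rewrite /cube_elts !in_setU => /orP[/orP[HV|HE]|HF].
  - by rewrite Hv H1 in HV.
  - by rewrite HE (edge_count HE).
  - case/imset2P: HF => i b _ _ ->; rewrite encS_face.
    have -> : count id (fmask i b) == 2 = false by case: i => [[|[|[|]]] Hi]; case: b.
    apply/negbTE/negP => /edge_count; rewrite encS_face.
    by case: i => [[|[|[|]]] Hi]; case: b.
by rewrite He; case: ifP.
Qed.

Lemma type_enc x : cube_type x = inord (tyN (encX x)).
Proof. by case: x => X HX; exact: type_encS HX. Qed.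

Lemma type_eq x y : (cube_type x == cube_type y) = (tyN (encX x) == tyN (encX y)).
Proof. by rewrite !type_enc -val_eqE /= !inordK ?tyN_lt. Qed.

Definition CK_types :=
  all (fun m => all (fun m' => (tyN m == tyN m') ==> ~~ incM m m') maskList) maskList.
Lemma CK_types_ok : CK_types. Proof. by vm_compute. Qed.

Lemma is_inc : is_incidence_system Gamma_cube.
Proof.
split.
- move=> i /=.
  have H : cadjb (false,false,false) (true,false,false) by [].
  have [x Hx] : exists x : cubeX, tyN (encX x) = i.
    case: i => [[|[|[|[|]]]] Hi] //.
    + by exists (vX (false,false,false)); rewrite /encX /= encS_vert.
    + by exists (vX (true,false,false)); rewrite /encX /= encS_vert.
    + by exists (eX H); rewrite /encX /= encS_edge.
    + by exists (fX i0 false); rewrite /encX /= encS_face.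
  by exists x; apply: val_inj; rewrite type_enc /= inordK ?Hx.
- by move=> x y; rewrite /= /cube_inc orbC.
- move=> x y /= /eqP; rewrite type_eq inc_encX => H.
  have := allP CK_types_ok _ (ENUM x) => /allP /(_ _ (ENUM y)).
  by rewrite H.
Qed.

Lemma deg_pres (g : {perm cubeX}) :
  (forall x y, cube_inc (g x) (g y) = cube_inc x y) -> forall x, degX (g x) = degX x.
Proof.
move=> Hg x; rewrite /degX.
have -> : [set y | cube_inc (g x) y] = g @: [set y | cube_inc x y].
  apply/setP => y; rewrite inE; apply/idP/imsetP => [H | [z Hz ->]].
    by exists (g^-1 y)%g; [rewrite inE -Hg permKV | rewrite permKV].
  by rewrite inE in Hz; rewrite Hg.
by rewrite card_imset //; exact: perm_inj.
Qed.

Lemma count1_eq (T : eqType) (P : pred T) s a b :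
  count P s == 1 -> a \in s -> b \in s -> P a -> P b -> a = b.
Proof.
rewrite -size_filter => /eqP H Ha Hb Pa Pb.
have Ha' : a \in filter P s by rewrite mem_filter Pa Ha.
have Hb' : b \in filter P s by rewrite mem_filter Pb Hb.
move: H Ha' Hb'; case: (filter P s) => [|c [|]] //= _.
by rewrite !inE => /eqP -> /eqP ->.
Qed.

Definition patP (K : seq (seq bool)) (m m' : seq bool) :=
  (degM m' == degM m) && all (fun k => incM m' k == incM m k) K.
Definition patOK (K : seq (seq bool)) (m : seq bool) :=
  count (patP K m) maskList == 1.
Fixpoint propcheck (K rest : seq (seq bool)) : bool :=
  match rest with
  | [::] => true
  | m :: r => patOK K m && propcheck (rcons K m) r
  end.

Lemma prop_step (g : {perm cubeX}) :
  (forall x y, cube_inc (g x) (g y) = cube_inc x y) ->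
  forall rest K, all (mem maskList) rest -> {subset K <= maskList} ->
  propcheck K rest ->
  (forall x, encX x \in K -> g x = x) -> forall x, encX x \in K ++ rest -> g x = x.
Proof.
move=> Hg; elim=> [|m r IH] K /= Hr HK.
  by move=> _ H x; rewrite cats0; exact: H.
case/andP: Hr => Hm Hr /andP [Hp Hc] HKf.
have Hfx : forall x, encX x = m -> g x = x.
  move=> x Ex; apply: encX_inj.
  apply: (count1_eq Hp (ENUM _) (ENUM x)); last by rewrite Ex /patP eqxx; apply/allP => k _.
  rewrite /patP -Ex -!degX_enc deg_pres // eqxx /=.
  apply/allP => k Hk; have [y Ey] := SURJ (HK _ Hk).
  rewrite -Ey -!inc_encX -{1}(HKf y) ?Hg ?eqxx //; by rewrite Ey.
rewrite -cat_rcons; apply: IH => //.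
- by move=> k; rewrite mem_rcons inE => /orP [/eqP ->|/HK].
- by move=> x; rewrite mem_rcons inE => /orP [/eqP /Hfx|/HKf].
Qed.

Definition t0 : b3 := (false, false, false).
Definition t1 : b3 := (true, false, false).
Lemma t01 : cadjb t0 t1. Proof. by []. Qed.
Definition a0 : cubeX := vX t0.
Definition e0 : cubeX := eX t01.
Definition f0 : cubeX := fX i2 false.
Lemma enc_a0 : encX a0 = vmask t0. Proof. by rewrite /encX /= encS_vert. Qed.
Lemma enc_e0 : encX e0 = emask t0 t1. Proof. by rewrite /encX /= encS_edge. Qed.
Lemma enc_f0 : encX f0 = fmask 2 false. Proof. by rewrite /encX /= encS_face. Qed.

Definition restList : seq (seq bool) :=
[:: [:: true; true; false; false; false; false; false; false];
 [:: false; true; false; false; false; false; false; false];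
 [:: false; false; false; false; true; false; false; false];
 [:: true; false; true; false; false; false; false; false];
 [:: false; false; true; false; false; false; false; false];
 [:: false; false; false; false; false; false; true; false];
 [:: false; false; true; true; false; false; false; false];
 [:: false; false; false; true; false; false; false; false];
 [:: false; true; false; true; false; false; false; false];
 [:: false; true; false; false; false; true; false; false];
 [:: false; false; false; false; false; true; false; false];
 [:: false; false; false; false; false; false; false; true];
 [:: false; false; true; false; false; false; true; false];
 [:: false; false; false; true; false; false; false; true];
 [:: false; false; false; false; true; true; false; false];
 [:: false; false; false; false; true; false; true; false];
 [:: false; false; false; false; false; true; false; true];
 [:: false; false; false; false; false; false; true; true];
 [:: true; true; true; true; false; false; false; false];
 [:: false; false; false; false; true; true; true; true];
 [:: true; true; false; false; true; true; false; false];
 [:: false; false; true; true; false; false; true; true];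
 [:: false; true; false; true; false; true; false; true]]
.
Definition K0 := [:: vmask t0; emask t0 t1; fmask 2 false].
Lemma CK_prop : [&& all (mem maskList) restList, all (mem maskList) K0,
   propcheck K0 restList & all (mem (K0 ++ restList)) maskList].
Proof. by vm_compute. Qed.

Lemma fix_all (g : {perm cubeX}) :
  (forall x y, cube_inc (g x) (g y) = cube_inc x y) ->
  g a0 = a0 -> g e0 = e0 -> g f0 = f0 -> forall x, g x = x.
Proof.
move=> Hg H1 H2 H3 x.
case/and4P: CK_prop => Hr HK Hp Hall.
apply: (prop_step Hg Hr _ Hp); last exact: (allP Hall _ (ENUM x)).
- by move=> k Hk; exact: (allP HK).
- move=> y; rewrite !inE -enc_a0 -enc_e0 -enc_f0 => /or3P [] /eqP /encX_inj ->; by [].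
Qed.

Definition corr := correlations Gamma_cube.

Lemma corr_inc (a : {perm cubeX}) : a \in corr -> forall x y, cube_inc (a x) (a y) = cube_inc x y.
Proof.
rewrite inE => /andP [_ /forallP H] x y.
by move/forallP: (H x) => /(_ y) /eqP /= <-.
Qed.

Definition flagF (a : {perm cubeX}) := (encX (a a0), encX (a e0), encX (a f0)).


Lemma flag_inj : {in corr &, injective flagF}.
Proof. Time
move=> a b Ha Hb E.
have E1 : a a0 = b a0 by apply: encX_inj; exact: (congr1 (fun p => p.1.1) E).
have E2 : a e0 = b e0 by apply: encX_inj; exact: (congr1 (fun p => p.1.2) E).
have E3 : a f0 = b f0 by apply: encX_inj; exact: (congr1 (fun p => p.2) E).
have Hg : forall x y, cube_inc ((a * b^-1)%g x) ((a * b^-1)%g y) = cube_inc x y.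
  move=> x y; rewrite !permM -(corr_inc Ha x y).
  by rewrite -(corr_inc Hb) !permKV.
have F := fix_all Hg.
apply/permP => x; have := F _ _ _ x.
rewrite !permM E1 E2 E3 !permK => H.
by rewrite -{2}H ?permKV.
Qed.

Definition L6 := [seq m <- maskList | degM m == 6].
Definition L4 := [seq m <- maskList | degM m == 4].
Definition L8 := [seq m <- maskList | degM m == 8].
Definition LF := [seq p <- [seq (a, bc.1, bc.2) | a <- L6, bc <- [seq (b, c) | b <- L4, c <- L8]]
                    | incM p.1.1 p.1.2 && incM p.1.2 p.2 && incM p.1.1 p.2].
Arguments L6 : simpl never.
Arguments L4 : simpl never.
Arguments L8 : simpl never.
Arguments maskList : simpl never.
Lemma LF_size : size LF = 48. Proof. by vm_compute. Qed.
Lemma CK_flag1 : [&& degM (vmask t0) == 6, degM (emask t0 t1) == 4 & degM (fmask 2 false) == 8].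
Proof. by vm_compute. Qed.
Lemma CK_flag2 : [&& incM (vmask t0) (emask t0 t1), incM (emask t0 t1) (fmask 2 false) &
   incM (vmask t0) (fmask 2 false)].
Proof. by vm_compute. Qed.


Arguments L6 : simpl never.
Arguments L4 : simpl never.
Arguments L8 : simpl never.
Lemma flag_in (a : {perm cubeX}) : a \in corr -> flagF a \in LF.
Proof.
move=> Ha; have Hi := corr_inc Ha; have Hd := deg_pres Hi.
case/and3P: CK_flag1 => D6 D4 D8; case/and3P: CK_flag2 => I1 I2 I3.
have EA : incM (encX (a a0)) (encX (a e0)).
  rewrite -inc_encX Hi inc_encX enc_a0 enc_e0; exact I1.
have EB : incM (encX (a e0)) (encX (a f0)).
  rewrite -inc_encX Hi inc_encX enc_f0 enc_e0; exact I2.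
have EC : incM (encX (a a0)) (encX (a f0)).
  rewrite -inc_encX Hi inc_encX enc_a0 enc_f0; exact I3.
have HA : encX (a a0) \in L6.
  rewrite mem_filter -degX_enc Hd degX_enc enc_a0 D6; exact: ENUM.
have HB : encX (a e0) \in L4.
  rewrite mem_filter -degX_enc Hd degX_enc enc_e0 D4; exact: ENUM.
have HC : encX (a f0) \in L8.
  rewrite mem_filter -degX_enc Hd degX_enc enc_f0 D8; exact: ENUM.
rewrite /flagF /LF; move: (encX (a a0)) (encX (a e0)) (encX (a f0)) EA EB EC HA HB HC.
move=> A B C EA EB EC HA HB HC.
rewrite mem_filter; apply/andP; split; first by apply/andP; split; [apply/andP; split; [exact EA|exact EB]|exact EC].
apply/allpairsP; exists (A, (B, C)); split; [exact HA| |reflexivity].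
apply/allpairsP; exists (B, C); split; [exact HB|exact HC|reflexivity].
Qed.

Lemma corr_card : #|corr| <= 48.
Proof.
rewrite -LF_size cardE -(size_map flagF).
apply: uniq_leq_size.
- rewrite (map_inj_in_uniq (f := flagF)) ?enum_uniq //.
  by move=> a b; rewrite !mem_enum; exact: flag_inj.
- by move=> p /mapP [a Ha ->]; apply: flag_in; rewrite -mem_enum.
Qed.

Notation gT := ({perm 'I_4} * 'Z_2)%type.

Definition z1 : 'Z_2 := @Ordinal 2 1 isT.
Lemma zval (c d : 'Z_2) : val (c * d)%g = ((c + d) %% 2)%N.
Proof. reflexivity. Qed.
Lemma zodd (c d : 'Z_2) : odd (c * d)%g = odd c (+) odd d.
Proof. by rewrite zval modn2 oddb oddD. Qed.
Lemma zE (c : 'Z_2) : c = if odd c then z1 else 1%g.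
Proof. by case: c => [[|[|]]] ? //=; apply: val_inj. Qed.
Lemma zinj (c d : 'Z_2) : odd c = odd d -> c = d.
Proof. by move=> H; rewrite (zE c) (zE d) H. Qed.

Definition o0 : 'I_4 := @Ordinal 4 0 isT.
Definition o1 : 'I_4 := @Ordinal 4 1 isT.
Definition o2 : 'I_4 := @Ordinal 4 2 isT.
Definition o3 : 'I_4 := @Ordinal 4 3 isT.
Definition ord4 : seq 'I_4 := [:: o0; o1; o2; o3].
Lemma mem_ord4 i : i \in ord4. Proof. by case: i => [[|[|[|[|]]]] Hi]. Qed.
Lemma uniq_ord4 : uniq ord4. Proof. by []. Qed.
Lemma index_ord4 (i : 'I_4) : index i ord4 = i.
Proof. case: i => [k Hk]; do 4? [case: k Hk => [|k] Hk; first reflexivity]. by []. Qed.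

Definition pc (s : {perm 'I_4}) : seq nat := [seq val (s i) | i <- ord4].
Lemma ord4_cases (P : 'I_4 -> Prop) : P o0 -> P o1 -> P o2 -> P o3 -> forall i, P i.
Proof.
move=> H0 H1 H2 H3 i; have := mem_ord4 i.
by rewrite !inE => /or4P [] /eqP ->.
Qed.
Lemma nth_pc (s : {perm 'I_4}) (i : 'I_4) : nth 0 (pc s) i = s i.
Proof. by elim/ord4_cases: i. Qed.
Lemma pc_inj : injective pc.
Proof. by move=> s t E; apply/permP => i; apply/val_inj/eqP; rewrite /= -!nth_pc E. Qed.
Lemma index_pc (s : {perm 'I_4}) (j : 'I_4) : index (val (s j)) (pc s) = j.
Proof.
rewrite /pc (index_map (f := fun i => val (s i))) ?index_ord4 //.
by move=> a b /val_inj /perm_inj.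
Qed.

Definition PL : seq (seq nat) := permutations (iota 0 4).
Lemma pc_PL (s : {perm 'I_4}) : pc s \in PL.
Proof.
rewrite mem_permutations; apply: uniq_perm; last first.
- move=> k; rewrite mem_iota add0n; apply/mapP/idP => [[i _ ->]|Hk].
    exact: ltn_ord.
  exists ((s^-1)%g (Ordinal Hk)); first exact: mem_ord4.
  by rewrite permKV.
- exact: iota_uniq.
- rewrite /pc (map_inj_uniq (f := fun i => val (s i))) //.
  by move=> a b /val_inj /perm_inj.
Qed.

Definition idxb (t : b3) : nat := (2 * (t.1.1 != t.1.2) + (t.1.1 != t.2))%N.
Definition parb (t : b3) : bool := t.1.1 (+) t.1.2 (+) t.2.
Definition vertb (i : nat) (e : bool) : b3 :=
  let a := e (+) (1 < i) (+) odd i in (a, a (+) (1 < i), a (+) odd i).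
Lemma idxb_lt t : idxb t < 4. Proof. by case: t => [[[] []] []]. Qed.

Definition idx (v : cvert) : 'I_4 := inord (idxb (bitsof v)).
Definition par (v : cvert) : bool := parb (bitsof v).
Definition vert (i : 'I_4) (e : bool) : cvert := vof (vertb i e).
Lemma idx_vert i e : idx (vert i e) = i.
Proof.
apply: val_inj => /=; rewrite /idx /vert bitsofK inordK ?idxb_lt //.
by case: i => [[|[|[|[|]]]] Hi] //; case: e.
Qed.
Lemma par_vert i e : par (vert i e) = e.
Proof. by rewrite /par /vert bitsofK; case: i => [[|[|[|[|]]]] Hi] //; case: e. Qed.
Lemma vertK v : vert (idx v) (par v) = v.
Proof.
rewrite -[RHS]vofK /vert /idx /par; apply: f_equal.
case: (bitsof v) => [[[] []] []]; rewrite /= ?inordK //.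
Qed.

Definition qv (g : gT) (v : cvert) : cvert := vert (g.1 (idx v)) (par v (+) odd g.2).
Definition qvi (g : gT) (v : cvert) : cvert := vert ((g.1^-1)%g (idx v)) (par v (+) odd g.2).
Lemma qvK g : cancel (qv g) (qvi g).
Proof. by move=> v; rewrite /qvi /qv idx_vert par_vert permK -addbA addbb addbF vertK. Qed.
Lemma qviK g : cancel (qvi g) (qv g).
Proof. by move=> v; rewrite /qvi /qv idx_vert par_vert permKV -addbA addbb addbF vertK. Qed.
Lemma qv_inj g : injective (qv g). Proof. exact: can_inj (qvK g). Qed.

Definition qinvb (p : seq nat) (cb : bool) (t : b3) : b3 :=
  vertb (index (idxb t) p) (parb t (+) cb).
Definition imgM (p : seq nat) (cb : bool) (m : seq bool) : seq bool :=
  [seq nth false m (index (qinvb p cb t) bl3) | t <- bl3].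

Lemma qvi_vof g t : qvi g (vof t) = vof (qinvb (pc g.1) (odd g.2) t).
Proof.
rewrite /qvi /vert /qinvb; congr (vof (vertb _ _)); rewrite /idx /par bitsofK //.
set j := ((g.1)^-1)%g _.
have -> : idxb t = val (g.1 j) by rewrite /j permKV /= inordK ?idxb_lt.
by rewrite index_pc.
Qed.

Lemma nth_encS (X : {set cvert}) u : nth false (encS X) (index u bl3) = (vof u \in X).
Proof.
rewrite /encS (nth_map (false,false,false)) ?index_mem ?mem_bl3 //.
by rewrite nth_index ?mem_bl3.
Qed.

Lemma encS_img g (X : {set cvert}) :
  encS (qv g @: X) = imgM (pc g.1) (odd g.2) (encS X).
Proof.
apply: eq_map => t; rewrite nth_encS -qvi_vof.
apply/imsetP/idP => [[v Hv ->]|H]; first by rewrite qvK.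
by exists (qvi g (vof t)); rewrite ?qviK.
Qed.

Definition CK_img :=
  all (fun p => all (fun cb => all (fun m => imgM p cb m \in maskList) maskList) [:: false; true]) PL.
Lemma CK_img_ok : CK_img. Proof. by vm_compute. Qed.

Lemma chi_proof g (x : cubeX) : qv g @: val x \in cube_elts.
Proof.
have Hm : encS (qv g @: val x) \in maskList.
  have Hb : odd g.2 \in [:: false; true] by case: (odd g.2).
  rewrite encS_img; have := allP CK_img_ok _ (pc_PL g.1) => /allP /(_ _ Hb).
  by move=> /allP /(_ _ (ENUM x)).
have [y Ey] := SURJ Hm.
by rewrite -(encS_inj Ey) (valP y).
Qed.

Definition chiF g (x : cubeX) : cubeX := Sub (qv g @: val x) (chi_proof g x).
Lemma chiF_inj g : injective (chiF g).
Proof.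
move=> x y /(congr1 val) E; apply: val_inj.
have E' : qv g @: val x = qv g @: val y := E.
move: E'; apply: imset_inj; exact: qv_inj.
Qed.
Definition chiP g : {perm cubeX} := perm (@chiF_inj g).

Lemma enc_chi g x : encX (chiP g x) = imgM (pc g.1) (odd g.2) (encX x).
Proof. by rewrite permE /encX /= encS_img. Qed.

Lemma qv_mul (g h : gT) v : qv (g * h)%g v = qv h (qv g v).
Proof. by rewrite /qv idx_vert par_vert permM zodd addbA. Qed.

Lemma chi_morphM : {in S4xC2 &, {morph chiP : g h / (g * h)%g}}.
Proof.
move=> g h _ _; apply/permP => x; rewrite permM !permE; apply: val_inj.
change (qv (g * h)%g @: val x = qv h @: (qv g @: val x)).
by rewrite -imset_comp; apply: eq_imset => v; exact: qv_mul.
Qed.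
Definition chiM : {morphism S4xC2 >-> {perm cubeX}} := Morphism chi_morphM.

Lemma chi_vX g t : chiP g (vX t) = vX (bitsof (qv g (vof t))).
Proof.
apply: val_inj; rewrite permE.
change (qv g @: [set vof t] = [set vof (bitsof (qv g (vof t)))]).
by rewrite imset_set1 vofK.
Qed.

Lemma chi_inj : {in S4xC2 &, injective chiP}.
Proof.
move=> g h _ _ E.
have Hv : forall t, qv g (vof t) = qv h (vof t).
  move=> t; have := chi_vX g t; rewrite E chi_vX => /(congr1 val) /= /set1_inj.
  by rewrite !vofK => ->.
have Hq : forall i e, vert (g.1 i) (e (+) odd g.2) = vert (h.1 i) (e (+) odd h.2).
  move=> i e; have := Hv (vertb i e).
  by rewrite /qv -/(vert i e) idx_vert par_vert.
have H1 : g.1 = h.1.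
  by apply/permP => i; have := congr1 idx (Hq i false); rewrite !idx_vert.
have H2 : g.2 = h.2.
  by apply: zinj; have := congr1 par (Hq o0 false); rewrite !par_vert.
by case: g h H1 H2 {E Hv Hq} => [s c] [t d] /= -> ->.
Qed.

Definition CK2 (f : seq nat -> bool -> seq bool -> seq bool -> bool) :=
  all (fun p => all (fun cb => all (fun m1 => all (fun m2 => f p cb m1 m2) maskList) maskList)
     [:: false; true]) PL.
Lemma CK2P f : CK2 f -> forall (g : gT) x y, f (pc g.1) (odd g.2) (encX x) (encX y).
Proof.
move=> H g x y.
have Hb : odd g.2 \in [:: false; true] by case: (odd g.2).
move/allP: H => /(_ _ (pc_PL g.1)) /allP /(_ _ Hb) /allP /(_ _ (ENUM x)) /allP /(_ _ (ENUM y)).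
exact.
Qed.

Definition fimg p cb m1 m2 :=
  ((tyN m1 == tyN m2) == (tyN (imgM p cb m1) == tyN (imgM p cb m2))) &&
  (incM m1 m2 == incM (imgM p cb m1) (imgM p cb m2)).
Lemma CK_fimg : CK2 fimg. Proof. by vm_compute. Qed.

Definition corr_cube := correlations Gamma_cube.

Lemma chi_corr (g : gT) : chiP g \in correlations Gamma_cube.
Proof.
rewrite inE; apply/andP; split; apply/forallP => x; apply/forallP => y.
- have := CK2P CK_fimg g x y; case/andP => H _.
  by rewrite /= !type_eq !enc_chi.
- have := CK2P CK_fimg g x y; case/andP => _ H.
  by rewrite /= !inc_encX !enc_chi.
Qed.

Definition CK_tp := all (fun p => all (fun m => tyN (imgM p false m) == tyN m) maskList) PL.
Lemma CK_tp_ok : CK_tp. Proof. by vm_compute. Qed.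
Definition CK_ntp := all (fun p => tyN (imgM p true (vmask t0)) != tyN (vmask t0)) PL.
Lemma CK_ntp_ok : CK_ntp. Proof. by vm_compute. Qed.

Lemma chi_tp (g : gT) : odd g.2 = false -> chiP g \in type_pres_correlations Gamma_cube.
Proof.
move=> Ho; rewrite inE chi_corr /=; apply/forallP => x.
rewrite type_eq enc_chi Ho.
by move/allP: CK_tp_ok => /(_ _ (pc_PL g.1)) /allP /(_ _ (ENUM x)).
Qed.

Lemma chi_ntp (g : gT) : odd g.2 = true -> chiP g \notin type_pres_correlations Gamma_cube.
Proof.
move=> Ho; rewrite inE negb_and; apply/orP; right; apply/negP => /forallP /(_ a0).
rewrite type_eq enc_chi Ho enc_a0.
by move/allP: CK_ntp_ok => /(_ _ (pc_PL g.1)) /negPf ->.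
Qed.

Lemma inG (g : gT) : g \in S4xC2. Proof. by rewrite inE. Qed.

Definition gcode := (seq nat * bool)%type.
Definition gc (g : gT) : gcode := (pc g.1, odd g.2).
Definition gmul (a b : gcode) : gcode := ([seq nth 0 b.1 k | k <- a.1], a.2 (+) b.2).
Lemma pc_mul (s t : {perm 'I_4}) : pc (s * t)%g = [seq nth 0 (pc t) k | k <- pc s].
Proof. by rewrite /pc -map_comp; apply: eq_map => i /=; rewrite permM nth_pc. Qed.
Lemma gc_mul (g h : gT) : gc (g * h)%g = gmul (gc g) (gc h).
Proof. by rewrite /gc /gmul /= pc_mul zodd. Qed.
Lemma gc_inj : injective gc.
Proof.
move=> [s c] [t d] E.
have E1 := congr1 fst E; have E2 := congr1 snd E; simpl in E1, E2.
by rewrite (pc_inj E1) (zinj E2).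
Qed.
Definition e1 : gcode := ([:: 0; 1; 2; 3], false).
Lemma gc1 : gc 1%g = e1. Proof. by rewrite /gc /pc /= !perm1. Qed.
Fixpoint gpow (a : gcode) (n : nat) : gcode := if n is n'.+1 then gmul a (gpow a n') else e1.
Lemma gc_exp (g : gT) n : gc (g ^+ n)%g = gpow (gc g) n.
Proof. by elim: n => [|n IH]; [rewrite expg0 gc1 | rewrite expgS gc_mul IH]. Qed.
Lemma gc_eq1 (g : gT) : (g == 1)%g = (gc g == e1).
Proof. by rewrite -gc1; apply/eqP/eqP => [->|/gc_inj]. Qed.

Definition GL : seq gcode := [seq (p, b) | p <- PL, b <- [:: false; true]].
Arguments GL : simpl never.
Arguments PL : simpl never.
Lemma gc_GL g : gc g \in GL.
Proof. by apply/allpairsP; exists (pc g.1, odd g.2); split; [exact: pc_PL | case: (odd g.2) |]. Qed.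

Definition sx : {perm 'I_4} := (tperm o0 o1 * tperm o1 o2 * tperm o2 o3)%g.
Definition sy : {perm 'I_4} := tperm o0 o1.
Definition x0 : gT := (sx, z1).
Definition y0 : gT := (sy, 1%g).
Definition xc : gcode := ([:: 3; 0; 1; 2], true).
Definition yc : gcode := ([:: 1; 0; 2; 3], false).
Lemma gc_x : gc x0 = xc.
Proof. by rewrite /gc /pc /= !permM !permE. Qed.
Lemma gc_y : gc y0 = yc.
Proof. by rewrite /gc /pc /= !permE. Qed.

Definition Qc (a b : gcode) : bool :=
  let ab := gmul a b in
  [&& gpow a 4 == e1, gpow a 2 != e1, gpow b 2 == e1, b != e1 &
      [&& gpow ab 6 == e1, gpow ab 2 != e1 & gpow ab 3 != e1]].
Definition Qg (u v : gT) : bool :=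
  [&& (u ^+ 4 == 1)%g, (u ^+ 2 != 1)%g, (v ^+ 2 == 1)%g, (v != 1)%g &
      [&& ((u * v) ^+ 6 == 1)%g, ((u * v) ^+ 2 != 1)%g & ((u * v) ^+ 3 != 1)%g]].
Lemma Qg_c u v : Qg u v = Qc (gc u) (gc v).
Proof. by rewrite /Qg /Qc !gc_eq1 !gc_exp gc_mul. Qed.

Definition LQ := [seq p <- [seq (a, b) | a <- GL, b <- GL] | Qc p.1 p.2].
Arguments LQ : simpl never.
Lemma LQ_size : size LQ = 48. Proof. by vm_compute. Qed.
Lemma Qxy : Qc xc yc. Proof. by vm_compute. Qed.

Fixpoint reach (n : nat) : seq gcode :=
  if n is n'.+1 then
    let S := reach n' in undup (S ++ [seq gmul a xc | a <- S] ++ [seq gmul a yc | a <- S])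
  else [:: e1].
Lemma CK_reach : all (mem (reach 10)) GL. Proof. by vm_compute. Qed.

Section AutFacts.
Variable a : {perm gT}.
Hypothesis Ha : a \in Aut S4xC2.
Lemma autM g h : a (g * h)%g = (a g * a h)%g.
Proof. have H := Aut_morphic Ha; move/morphicP: H => H; exact: H _ _ (inG g) (inG h). Qed.
Lemma aut1 : a 1%g = 1%g.
Proof.
have H := autM 1 1; rewrite mulg1 in H.
by apply: (mulgI (a 1%g)); rewrite mulg1 -H.
Qed.
Lemma autX g n : a (g ^+ n)%g = (a g ^+ n)%g.
Proof. by elim: n => [|n IH]; rewrite ?expg0 ?aut1 // !expgS autM IH. Qed.
Lemma aut_eq1 g : (a g == 1)%g = (g == 1)%g.
Proof. by rewrite -{1}aut1; apply/eqP/eqP => [/perm_inj|->]. Qed.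
Lemma Qg_aut u v : Qg (a u) (a v) = Qg u v.
Proof. by rewrite /Qg -!autX -autM -!autX !aut_eq1. Qed.
End AutFacts.

Lemma reach_ok a b : a \in Aut S4xC2 -> b \in Aut S4xC2 -> a x0 = b x0 -> a y0 = b y0 ->
  forall n c, c \in reach n -> exists g, gc g = c /\ a g = b g.
Proof.
move=> Ha Hb Hx Hy; elim=> [|n IH] c /=.
  rewrite inE => /eqP ->; exists 1%g; split; first exact: gc1.
  by rewrite (aut1 Ha) (aut1 Hb).
rewrite mem_undup !mem_cat => /or3P [/IH //|/mapP [d Hd ->]|/mapP [d Hd ->]].
- have [g [Eg Hg]] := IH d Hd; exists (g * x0)%g; split.
    by rewrite gc_mul Eg gc_x.
  by rewrite (autM Ha) (autM Hb) Hg Hx.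
- have [g [Eg Hg]] := IH d Hd; exists (g * y0)%g; split.
    by rewrite gc_mul Eg gc_y.
  by rewrite (autM Ha) (autM Hb) Hg Hy.
Qed.

Lemma aut_det a b : a \in Aut S4xC2 -> b \in Aut S4xC2 -> a x0 = b x0 -> a y0 = b y0 -> a = b.
Proof.
move=> Ha Hb Hx Hy; apply/permP => g.
have [h [Eh Hh]] := reach_ok Ha Hb Hx Hy (allP CK_reach _ (gc_GL g)).
by rewrite -(gc_inj Eh).
Qed.

Lemma Aut_card : #|Aut S4xC2| <= 48.
Proof.
pose F (a : {perm gT}) := (gc (a x0), gc (a y0)).
rewrite -LQ_size cardE -(size_map F).
apply: uniq_leq_size.
- rewrite (map_inj_in_uniq (f := F)) ?enum_uniq //.
  move=> a b; rewrite !mem_enum => Ha Hb E.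
  apply: aut_det => //; apply: gc_inj.
  + exact: (congr1 fst E).
  + exact: (congr1 snd E).
- move=> p /mapP [a Ha ->]; rewrite mem_enum in Ha.
  rewrite mem_filter; apply/andP; split.
    change (Qc (gc (a x0)) (gc (a y0))).
    by rewrite -Qg_c Qg_aut // Qg_c gc_x gc_y; exact: Qxy.
  by apply/allpairsP; exists (gc (a x0), gc (a y0)); split; rewrite ?gc_GL.
Qed.

Lemma inN (g : gT) : g \in 'N(S4xC2)%g.
Proof. by rewrite inE; exact: subsetT. Qed.

Definition wz (s : {perm 'I_4}) : 'Z_2 := if odd_perm s then z1 else 1%g.
Lemma wz_odd s : odd (wz s) = odd_perm s. Proof. by rewrite /wz; case: odd_perm. Qed.
Definition tauF (g : gT) : gT := (g.1, (g.2 * wz g.1)%g).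
Lemma tauFK : involutive tauF.
Proof.
move=> [s c]; rewrite /tauF /=; congr pair; apply: zinj.
by rewrite !zodd wz_odd -addbA addbb addbF.
Qed.
Definition tauP : {perm gT} := perm (inv_inj tauFK).
Lemma tauM g h : tauF (g * h)%g = (tauF g * tauF h)%g.
Proof.
rewrite /tauF /=; congr pair; apply: zinj.
rewrite !zodd !wz_odd odd_permM.
by case: (odd g.2); case: (odd h.2); case: (odd_perm g.1); case: (odd_perm h.1).
Qed.
Lemma tau_Aut : tauP \in Aut S4xC2.
Proof.
rewrite inE; apply/andP; split.
  by apply/subsetP => z _; exact: inG.
by apply/morphicP => g h _ _; rewrite !permE; exact: tauM.
Qed.

Lemma conjg_pair (g h : gT) : (g ^ h)%g = (g.1 ^ h.1, g.2 ^ h.2)%g.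
Proof. by []. Qed.
Lemma zconj (c d : 'Z_2) : (c ^ d)%g = c.
Proof. by move: c d => [[|[|n]] Hc] [[|[|m]] Hd]; try apply: val_inj. Qed.

Lemma tau_conj g w : tauF (w ^ g)%g = (tauF w ^ g)%g.
Proof. by rewrite !conjg_pair /tauF /= !zconj /wz odd_permJ. Qed.

Lemma tau_comm g : (conj_aut S4xC2 g * tauP = tauP * conj_aut S4xC2 g)%g.
Proof.
apply/permP => w; rewrite !permM (conj_autE (inG g) (inG w)).
rewrite (conj_autE (inG g) (inG _)) !permE; exact: tau_conj.
Qed.

Lemma tau2 : (tauP * tauP = 1)%g.
Proof. by apply/permP => w; rewrite permM perm1 !permE tauFK. Qed.

Definition tp (b : bool) : {perm gT} := if b then tauP else 1%g.
Lemma tp_comm b g : (tp b * conj_aut S4xC2 g = conj_aut S4xC2 g * tp b)%g.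
Proof. by case: b; rewrite /tp ?tau_comm ?mul1g ?mulg1. Qed.
Lemma tpD a b : tp (a (+) b) = (tp a * tp b)%g.
Proof. by case: a; case: b; rewrite /tp ?tau2 ?mulg1 ?mul1g. Qed.

Definition psiF (g : gT) : {perm gT} := (conj_aut S4xC2 g * tp (odd g.2))%g.
Lemma psi_morphM : {in S4xC2 &, {morph psiF : g h / (g * h)%g}}.
Proof.
move=> g h _ _; rewrite /psiF (morphM (conj_aut S4xC2) (inN g) (inN h)).
have -> : odd (g * h)%g.2 = odd g.2 (+) odd h.2 by exact: zodd.
rewrite tpD -!mulgA; congr (_ * _)%g.
by rewrite !mulgA tp_comm.
Qed.
Definition psiM : {morphism S4xC2 >-> {perm gT}} := Morphism psi_morphM.

Lemma psi_Aut g : psiF g \in Aut S4xC2.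
Proof.
rewrite /psiF; apply: groupM; first exact: Aut_aut.
by rewrite /tp; case: (odd g.2); [exact: tau_Aut | exact: group1].
Qed.

Lemma pick4 (a x b c : 'I_4) : (a == x) || (a == b) -> (a == x) || (a == c) -> b != c -> a = x.
Proof.
move=> /orP [/eqP //|/eqP ->] /orP [/eqP //|/eqP ->].
by rewrite eqxx.
Qed.

Lemma center_triv (s : {perm 'I_4}) : (forall i j, tperm (s i) (s j) = tperm i j) -> s = 1%g.
Proof.
move=> H.
have Hm : forall i j, i != j -> (s i == i) || (s i == j).
  move=> i j Hij; apply/negPn/negP; rewrite negb_or => /andP [H1 H2].
  have := congr1 (fun p : {perm 'I_4} => p (s i)) (H i j).
  rewrite /= tpermL (tpermD (negbT _) (negbT _)); last first.
  - by rewrite eq_sym; apply/negbTE.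
  - by rewrite eq_sym; apply/negbTE.
  by move/perm_inj => E; move: Hij; rewrite E eqxx.
apply/permP => i; rewrite perm1; elim/ord4_cases: i.
- exact: (pick4 (Hm o0 o1 isT) (Hm o0 o2 isT)).
- exact: (pick4 (Hm o1 o0 isT) (Hm o1 o2 isT)).
- exact: (pick4 (Hm o2 o0 isT) (Hm o2 o1 isT)).
- exact: (pick4 (Hm o3 o0 isT) (Hm o3 o1 isT)).
Qed.

Lemma psi_ker k : psiF k = 1%g -> k = 1%g.
Proof.
move=> Hk.
have Ho : odd k.2 = false.
  apply/negbTE/negP => Ho.
  pose w : gT := (tperm o0 o1, 1%g).
  have := congr1 (fun p : {perm gT} => p w) Hk.
  rewrite /psiF /tp Ho permM (conj_autE (inG k) (inG w)) perm1 permE.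
  move/(congr1 snd); rewrite /tauF conjg_pair /= zconj /wz odd_permJ odd_tperm /=.
  by rewrite mul1g; move/(congr1 (fun c : 'Z_2 => odd c)).
have Hc : conj_aut S4xC2 k = 1%g by move: Hk; rewrite /psiF Ho /tp mulg1.
have Hs : k.1 = 1%g.
  apply: center_triv => i j.
  have := congr1 (fun p : {perm gT} => p (tperm i j, 1%g)) Hc.
  rewrite (conj_autE (inG k) (inG _)) perm1 conjg_pair /= => /(congr1 fst) /=.
  by rewrite tpermJ.
have H2 : k.2 = 1%g by apply: zinj; rewrite Ho.
by case: k Hs H2 {Hk Ho Hc} => s c /= -> ->.
Qed.

Lemma psi_inj : ('injm psiM)%g.
Proof.
apply/injmP => g h Hg Hh E.
have : psiM (g * h^-1)%g = 1%g.
  by rewrite morphM ?groupV // morphV // E mulgV.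
move/psi_ker/eqP; rewrite -eq_mulgV1 => /eqP.
exact.
Qed.

Lemma card_perm4 : #|{perm 'I_4}| = 24.
Proof.
transitivity (4`!); last by [].
have := card_perm [set: 'I_4]; rewrite cardsT card_ord => <-; apply: eq_card => s.
have -> : (s \in perm_on [set: 'I_4]) = true by apply/subsetP => x _; rewrite inE.
by [].
Qed.
Lemma card_G : #|S4xC2| = 48.
Proof. by rewrite /S4xC2 /= cardsT card_prod card_perm4 card_ord. Qed.

Lemma psiG : (psiM @* S4xC2)%g = Aut S4xC2.
Proof.
apply/eqP; rewrite eqEcard; apply/andP; split.
  rewrite morphimEsub //; apply/subsetP => a /imsetP [g _ ->]; exact: psi_Aut.
by rewrite (card_injm psi_inj) // card_G Aut_card.
Qed.

Definition phi2F (a : {perm gT}) : {perm cubeX} := chiP (invm psi_inj a).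

Lemma phi2_morphM : {in Aut S4xC2 &, {morph phi2F : a b / (a * b)%g}}.
Proof.
move=> a b Ha Hb; rewrite -psiG in Ha Hb; rewrite /phi2F (morphM (invm psi_inj) Ha Hb).
exact: chi_morphM (inG _) (inG _).
Qed.
Definition phi2 : {morphism Aut S4xC2 >-> {perm elt Gamma_cube}} := Morphism phi2_morphM.

Lemma chi_img : [set chiP g | g in S4xC2] = correlations Gamma_cube.
Proof.
apply/eqP; rewrite eqEcard; apply/andP; split.
  by apply/subsetP => a /imsetP [g _ ->]; exact: chi_corr.
rewrite (card_in_imset chi_inj) card_G; exact: corr_card.
Qed.

Lemma phi2_psi g : phi2 (psiM g) = chiP g.
Proof. by rewrite /= /phi2F invmE ?inG. Qed.

Lemma phi2_injm : ('injm phi2)%g.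
Proof.
apply/injmP => a b Ha Hb E.
have Ha' : a \in (psiM @* S4xC2)%g by rewrite psiG.
have Hb' : b \in (psiM @* S4xC2)%g by rewrite psiG.
have := chi_inj (inG _) (inG _) E.
exact: (injmP (injm_invm psi_inj)).
Qed.

Lemma phi2_im : (phi2 @* Aut S4xC2)%g = correlations Gamma_cube.
Proof.
rewrite morphimEsub // -chi_img; apply/setP => b; apply/imsetP/imsetP.
  by move=> [a Ha ->]; exists (invm psi_inj a); rewrite ?inG.
move=> [g _ ->]; exists (psiM g); last by rewrite phi2_psi.
exact: psi_Aut.
Qed.

Lemma conj_psi (g : gT) : conj_aut S4xC2 g = psiM (g.1, 1%g).
Proof.
rewrite /= /psiF /tp /= mulg1; apply/permP => w.
by rewrite (conj_autE (inG _) (inG _)) (conj_autE (inG _) (inG _)) !conjg_pair !zconj.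
Qed.

Lemma phi2_inn : (phi2 @* Inn S4xC2)%g = type_pres_correlations Gamma_cube.
Proof.
have sub : Inn S4xC2 \subset Aut S4xC2 by exact: Aut_conj_aut.
rewrite morphimEsub //; apply/setP => b; apply/imsetP/idP.
  move=> [a Ha ->]; case/morphimP: Ha => g _ _ ->.
  change (phi2 (conj_aut S4xC2 g) \in type_pres_correlations Gamma_cube).
  by rewrite conj_psi phi2_psi; apply: chi_tp.
move=> Hb.
have Hc : b \in correlations Gamma_cube by move: Hb; rewrite inE => /andP [].
rewrite -chi_img in Hc; case/imsetP: Hc => g _ Eb.
have Ho : odd g.2 = false.
  case Ho: (odd g.2) => //; by move: (chi_ntp Ho); rewrite -Eb Hb.
exists (conj_aut S4xC2 g).
  by apply: mem_morphim; rewrite ?inN ?inG.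
have -> : conj_aut S4xC2 g = psiM g by rewrite /= /psiF Ho /tp mulg1.
by rewrite phi2_psi.
Qed.

Theorem mainTheorem3 : incidence_geometric_representation Gamma_cube S4xC2.
Proof.
split; first exact: is_inc.
exists phi2; split; last exact: phi2_inn.
rewrite -phi2_im; apply/isomP; split; [exact: phi2_injm | by []].
Qed.
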